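(* Let $A$ be an involutive alphabet and let $\Gamma$ be an involutive $A$-tree. Then $\Gamma$ is regular if and only if $\Gamma$ is context-free.
   Context: An involutive alphabet is an alphabet $A$ with an involution $a\mapsto a^{-1}$ (fixed points allowed); any alphabet $A$ yields the involutive alphabet $A^{\pm1}=A\uplus A^{-1}$. An $A$-graph is a pair $(V,E)$ with $E\subseteq V\times A\times V$; an edge $(u,a,v)$ goes from $u$ to $v$ with label $a$. It is involutive if $(u,a,v)\in E\iff(v,a^{-1},u)\in E$; the inverse of the edge $(u,a,v)$ is $(v,a^{-1},u)$. The involutive closure of an $A$-graph adds all inverse edges (passing to $A^{\pm1}$ if $A$ is not involutive). A path is reduced if it contains no edge immediately followed by its inverse. A rooted involutive graph is a tree if every vertex is the end of a unique reduced path starting at the root (this does not depend on the root). An isomorphism of $A$-graphs is a bijection on vertices preserving and reflecting labeled edges; rooted isomorphisms also map root to root; for node-labeled $A$-graphs (with node labelings $p\colon V\to P$, $q\colon W\to Q$) an isomorphism is an $A$-isomorphism $\iota$ together with a bijection $\beta\colon P\to Q$ with $\beta(p(v))=q(\iota(v))$. Context-free: For a connected rooted involutive graph, the level of a node is its distance from the root; $\Gamma_n$ is the subgraph on nodes of level $\ge n$; for $v$ at level $n$, the end-cone $\Gamma(v)$ is the connected component of $\Gamma_n$ containing $v$, and its nodes of level exactly $n$ are its frontier points. An end-isomorphism is an $A$-isomorphism between two end-cones mapping frontier points onto frontier points. A connected involutive $A$-graph with $A$ a finite involutive alphabet is context-free if it has uniformly bounded degree and there is a choice of root for which there are only finitely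 many end-isomorphism classes of end-cones. Regular: A multi-edge NFA (mNFA) is $\mathcal{A}=(Q,A,T,\alpha,\lambda,\omega)$ with finite state set $Q$, finite alphabet $A$, finite transition set $T$ and maps $\alpha,\omega\colon T\to Q$ (start, end) and $\lambda\colon T\to A$ (label); multiple transitions with the same start, label and end are allowed. A run is a sequence $\tau_1\cdots\tau_\ell$ of transitions with $\omega(\tau_i)=\alpha(\tau_{i+1})$. For a state $p$, $\Gamma(p)$ is the graph whose nodes are the runs starting in $p$ (including the empty run $\varepsilon$, which is the root), with an edge from $\varrho$ to $\varrho\tau$ labeled $\lambda(\tau)$ for each transition $\tau$, then taking the involutive closure (viewing $A$ as involutive, passing to $A^{\pm1}$ if necessary); each node $\varrho$ is labeled by the state in which $\varrho$ ends ($p$ for $\varepsilon$). A rooted node-labeled involutive $A$-tree is regular if it is isomorphic as a rooted node-labeled $A$-graph to $\Gamma(p)$ for some state $p$ of some mNFA with alphabet $A$; a rooted involutive $A$-tree is regular if it is regular for some node labeling; an involutive $A$-tree is regular if it is regular for some choice of vertex as root. *)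

(* Defs.v *)
From Stdlib Require List.
From mathcomp Require Import all_boot.
Set Implicit Arguments. Unset Strict Implicit. Unset Printing Implicit Defensive.

Section Graphs.
Variables (A : Type) (inv : A -> A) (V : Type) (E : V -> A -> V -> Prop).

Definition involutive_graph : Prop :=
  forall u a v, E u a v <-> E v (inv a) u.

Fixpoint walk (u : V) (s : seq (A * V)) : Prop :=
  match s with
  | [::] => True
  | (a, v) :: s' => E u a v /\ walk v s'
  end.

Definition path_end (u : V) (s : seq (A * V)) : V := last u (map snd s).

Fixpoint reduced (u : V) (s : seq (A * V)) : Prop :=
  match s with
  | [::] => True
  | (a, v) :: s' =>
      match s' with
      | (b, w) :: _ => ~ (b = inv a /\ w = u)
      | [::] => True
      end /\ reduced v s'
  end.

Definition is_tree_at (r : V) : Prop :=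
  forall v, exists! s, walk r s /\ reduced r s /\ path_end r s = v.

(* An (unrooted) involutive A-tree: a tree for some (equivalently any) root. *)
Definition is_tree : Prop := exists r, is_tree_at r.

Definition connected : Prop :=
  forall u v, exists s, walk u s /\ path_end u s = v.

Definition bounded_degree : Prop :=
  exists N : nat, forall v (l : seq (A * V)),
    List.NoDup l -> (forall x, List.In x l -> E v x.1 x.2) -> size l <= N.

Definition level (r v : V) (n : nat) : Prop :=
  (exists s, walk r s /\ path_end r s = v /\ size s = n) /\
  (forall s, walk r s -> path_end r s = v -> n <= size s).

(* x belongs to the end-cone Gamma(v): the connected component of v in the
   induced subgraph Gamma_n on the nodes of level >= n, n = level of v *)
Definition cone (r v x : V) : Prop :=
  exists n, level r v n /\
    exists s, walk v s /\ path_end v s = x /\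
      List.Forall (fun y => exists m, level r y m /\ n <= m) (map snd s).

Definition frontier (r v x : V) : Prop :=
  cone r v x /\ exists n, level r v n /\ level r x n.

Definition end_iso (r v v' : V) : Prop :=
  exists f g : V -> V,
    (forall x, cone r v x -> cone r v' (f x)) /\
    (forall y, cone r v' y -> cone r v (g y)) /\
    (forall x, cone r v x -> g (f x) = x) /\
    (forall y, cone r v' y -> f (g y) = y) /\
    (forall x y a, cone r v x -> cone r v y -> (E x a y <-> E (f x) a (f y))) /\
    (forall x, cone r v x -> (frontier r v x <-> frontier r v' (f x))).

Definition finitely_many_cone_classes (r : V) : Prop :=
  exists reps : seq V, forall v, exists u, List.In u reps /\ end_iso r v u.

Definition context_free : Prop :=
  connected /\ bounded_degree /\ exists r, finitely_many_cone_classes r.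

End Graphs.

Record mNFA (A : Type) := MNFA {
  mstate : finType;
  mtrans : finType;
  msrc : mtrans -> mstate;
  mlbl : mtrans -> A;
  mtgt : mtrans -> mstate
}.

Section Runs.
Variables (A : Type) (inv : A -> A) (M : mNFA A).

Fixpoint is_run (p : mstate M) (s : seq (mtrans M)) : bool :=
  match s with
  | [::] => true
  | t :: s' => (msrc t == p) && is_run (mtgt t) s'
  end.

Definition run_node (p : mstate M) : Type := {s : seq (mtrans M) | is_run p s}.

Definition run_root (p : mstate M) : run_node p := exist _ [::] isT.

(* involutive closure of the edges rho --lambda(t)--> rho t *)
Definition run_edge (p : mstate M) (x : run_node p) (a : A) (y : run_node p) : Prop :=
  (exists t, sval y = rcons (sval x) t /\ a = mlbl t) \/
  (exists t, sval x = rcons (sval y) t /\ a = inv (mlbl t)).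

Definition run_label (p : mstate M) (x : run_node p) : mstate M :=
  last p (map (@mtgt A M) (sval x)).

End Runs.

Section Regular.
Variables (A : Type) (inv : A -> A) (V : Type) (E : V -> A -> V -> Prop).

Definition regular_labeled (P : Type) (lab : V -> P) (r : V) : Prop :=
  exists (M : mNFA A) (p : mstate M) (i : V -> @run_node A M p) (b : P -> mstate M),
    bijective i /\ i r = run_root p /\
    (forall u a v, E u a v <-> run_edge inv (i u) a (i v)) /\
    bijective b /\ (forall v, b (lab v) = run_label (i v)).

Definition regular_rooted (r : V) : Prop :=
  exists (P : Type) (lab : V -> P), regular_labeled lab r.

Definition regular_tree : Prop := exists r, regular_rooted r.

End Regular.

(* Main.v *)
From Stdlib Require Import ClassicalEpsilon Classical.
Require Import Defs.
From mathcomp Require Import all_boot zify.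
Set Implicit Arguments. Unset Strict Implicit. Unset Printing Implicit Defensive.

Section Gen.
Variables (A : Type) (inv : A -> A) (V : Type) (E : V -> A -> V -> Prop).
Hypothesis Hinv : involutive inv.
Hypothesis Hinvol : involutive_graph inv E.

Lemma walk_cat (u : V) (s1 s2 : seq (A * V)) : walk E u (s1 ++ s2) <-> walk E u s1 /\ walk E (path_end u s1) s2.
Proof.
elim: s1 u => [|[a v] s1 IH] u /=; first by rewrite /path_end /=; tauto.
rewrite IH /path_end /=. tauto.
Qed.

Lemma path_end_cat (u : V) (s1 s2 : seq (A * V)) : path_end u (s1++s2) = path_end (path_end u s1) s2.
Proof. by rewrite /path_end map_cat last_cat. Qed.

Lemma path_end_rcons (u : V) (s : seq (A * V)) (a : A) (w : V) : path_end u (rcons s (a,w)) = w.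
Proof. by rewrite /path_end map_rcons last_rcons. Qed.

Lemma path_end_cons (u : V) (a : A) (v : V) (s : seq (A * V)) : path_end u ((a,v) :: s) = path_end v s.
Proof. by []. Qed.

Lemma walk_rcons (u : V) (s : seq (A * V)) (a : A) (w : V) : walk E u (rcons s (a,w)) <-> walk E u s /\ E (path_end u s) a w.
Proof. rewrite -cats1 walk_cat /=; tauto. Qed.

Section Good.
Variables (r : V) (h : V -> nat).
Hypothesis G1 : forall v, h v = 0 <-> v = r.
Hypothesis G2 : forall x a w, E x a w -> h w = (h x).+1 \/ h x = (h w).+1.
Hypothesis G3 : forall x, 0 < h x -> exists a w, E x a w /\ h x = (h w).+1.
Hypothesis G4 : forall x a w a' w', E x a w -> E x a' w' ->
  h x = (h w).+1 -> h x = (h w').+1 -> a = a' /\ w = w'.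

Lemma hr : h r = 0. Proof. by apply/G1. Qed.

Lemma up_walk n : forall v, h v = n ->
  exists s, walk E r s /\ path_end r s = v /\ size s = n.
Proof.
elim: n => [|n IH] v hv.
  by exists [::]; split => //; split => //; symmetry; apply/G1.
have [a [w [Ew hw]]] : exists a w, E v a w /\ h v = (h w).+1 by apply: G3; rewrite hv.
have [s [ws [es ss]]] := IH w ltac:(lia).
exists (rcons s (inv a, v)); rewrite walk_rcons path_end_rcons size_rcons es; split => //.
split => //; exact: (proj1 (Hinvol v a w) Ew).
split => //; lia.
Qed.

Lemma lb u s : walk E u s -> h (path_end u s) <= h u + size s.
Proof.
elim: s u => [|[a v] s IH] u /=; first by rewrite /path_end /=; lia.
move=> [Euv ws]; have := IH v ws; rewrite path_end_cons.
case: (G2 Euv); lia.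
Qed.

Lemma level_h v n : level E r v n <-> h v = n.
Proof.
split.
  move=> [[s [ws [es ss]]] mn].
  have := lb ws; rewrite es hr ss => l1.
  have [s' [ws' [es' ss']]] := up_walk (erefl (h v)).
  have := mn s' ws' es'; lia.
move=> hv; split; first exact: up_walk.
move=> s ws es; have := lb ws; rewrite es hr; lia.
Qed.

Definition Desc v y := exists s, walk E v s /\ path_end v s = y /\ h y = h v + size s.

Lemma incr_in u s : walk E u s -> h (path_end u s) = h u + size s ->
  forall z, List.In z (map snd s) -> h u < h z.
Proof.
elim: s u => [|[a v] s IH] u //= [Euv ws]; rewrite path_end_cons => he z.
have := lb ws; have := G2 Euv => g l.
have hv : h v = (h u).+1 by case: g; lia.
move=> [<-|iz]; first lia.
have := IH v ws ltac:(lia) z iz; lia.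
Qed.

Lemma Desc_refl v : Desc v v.
Proof. by exists [::]; split => //; split => //=; lia. Qed.

Lemma Desc_le v y : Desc v y -> h v <= h y.
Proof. move=> [s [_ [_ e]]]; lia. Qed.

Lemma Desc_eq v y : Desc v y -> h y = h v -> y = v.
Proof. move=> [[|x s] [_ [<- e]]] e' //; rewrite /= in e; lia. Qed.

Lemma Desc_trans u v w : Desc u v -> Desc v w -> Desc u w.
Proof.
move=> [s1 [w1 [e1 h1]]] [s2 [w2 [e2 h2]]]; exists (s1 ++ s2).
rewrite walk_cat path_end_cat e1 size_cat; split => //; split => //; lia.
Qed.

Lemma Desc_step v y a z : Desc v y -> E y a z -> h v <= h z -> Desc v z.
Proof.
move=> [s [ws [es hs]]] Eyz hvz.
case: (G2 Eyz) => hz.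
  exists (rcons s (a,z)); rewrite walk_rcons path_end_rcons size_rcons es.
  split => //; split => //; lia.
move: ws es hs; case/lastP: s => [|s' [b w']] /=.
  move=> _ ey _; rewrite -ey /path_end /= in hz; lia.
rewrite walk_rcons path_end_rcons size_rcons => -[ws' Eb] ey; subst w'.
move=> hs; have := lb ws'; set w0 := path_end v s' in Eb * => l.
have hw0 : h y = (h w0).+1 by case: (G2 Eb); lia.
have Eb' := proj1 (Hinvol _ _ _) Eb.
have [_ ezw] := G4 Eyz Eb' hz hw0; subst z.
by exists s'; split => //; split => //; lia.
Qed.

Lemma Desc_walk v s : forall y, Desc v y -> walk E y s ->
  (forall z, List.In z (map snd s) -> h v <= h z) ->
  Desc v (path_end y s) /\ (forall z, List.In z (map snd s) -> Desc v z).
Proof.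
elim: s => [|[a w] s IH] y dy /=; first by [].
move=> [Eyw ws] Hz.
have dw : Desc v w by apply: (Desc_step dy Eyw); apply: Hz; left.
have [d1 d2] := IH w dw ws (fun z iz => Hz z (or_intror iz)).
split => // z [<-|iz] //; exact: d2.
Qed.

Lemma cone_Desc v x : cone E r v x <-> Desc v x.
Proof.
split.
  move=> [n [lvn [s [ws [es F]]]]]; move/level_h: lvn => hvn.
  rewrite -es; apply: (proj1 (Desc_walk (Desc_refl v) ws _)).
  move=> z iz; have [m [lm nm]] := proj1 (List.Forall_forall _ _) F z iz.
  move/level_h: lm; lia.
move=> [s [ws [es hs]]]; exists (h v); split; first exact/level_h.
exists s; split => //; split => //; apply/List.Forall_forall => z iz.
have := incr_in ws ltac:(by rewrite es) iz => l.
by exists (h z); split; [exact/level_h | lia].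
Qed.

Lemma frontier_eq v x : frontier E r v x <-> x = v.
Proof.
split.
  move=> [c [n [l1 l2]]]; move/level_h: l1; move/level_h: l2 => h1 h2.
  apply: Desc_eq; [exact/cone_Desc | lia].
move=> ->; split; first exact/cone_Desc/Desc_refl.
by exists (h v); split; apply/level_h.
Qed.

Definition InC u d y := exists s, walk E d s /\ path_end d s = y /\
  forall z, List.In z (d :: map snd s) -> Desc u z /\ z <> u.

Lemma Desc_child u a d : E u a d -> h d = (h u).+1 -> Desc u d.
Proof. by move=> Eud hd; exists [:: (a,d)] => /=; split => //; split => //; lia. Qed.

Lemma child_cone u a d y : E u a d -> h d = (h u).+1 -> (Desc d y <-> InC u d y).
Proof.
move=> Eud hd; have dud := Desc_child Eud hd.
split.
  move=> [s [ws [es hs]]]; exists s; split => //; split => //.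
  have hi := incr_in ws ltac:(by rewrite es).
  have [_ D2] := Desc_walk dud ws (fun z iz => ltac:(have := hi z iz; lia)).
  move=> z [<-|iz]; first by split => // e; move: hd; rewrite e; lia.
  split; first exact: D2.
  move=> e; have := hi z iz; rewrite e; lia.
move=> [s [ws [es Hz]]].
have H : forall z, List.In z (map snd s) -> h d <= h z.
  move=> z iz; have [dz nz] := Hz z (or_intror iz).
  have := Desc_le dz => l.
  case: (ltngtP (h u) (h z)) => c; try lia.
  by case: nz; apply: Desc_eq.
rewrite -es; exact: (proj1 (Desc_walk (Desc_refl d) ws H)).
Qed.

Record Inv u x (F G : V -> V) : Prop := {
  I1 : forall y, Desc u y -> Desc x (F y);
  I2 : forall y, Desc x y -> Desc u (G y);
  I3 : forall y, Desc u y -> G (F y) = y;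
  I4 : forall y, Desc x y -> F (G y) = y;
  I5 : forall y z a, Desc u y -> Desc u z -> (E y a z <-> E (F y) a (F z));
  I6 : F u = x }.

Lemma Inv_sym u x F G : Inv u x F G -> Inv x u G F.
Proof.
case=> i1 i2 i3 i4 i5 i6; split => //.
- move=> y z a dy dz; rewrite (i5 (G y) (G z) a (i2 _ dy) (i2 _ dz)) !i4 //.
- by rewrite -i6 i3 //; apply: Desc_refl.
Qed.

Lemma Inv_comp u x x' F G F' G' : Inv u x F G -> Inv x x' F' G' ->
  Inv u x' (fun y => F' (F y)) (fun y => G (G' y)).
Proof.
case=> i1 i2 i3 i4 i5 i6 [j1 j2 j3 j4 j5 j6]; split.
- by move=> y dy; apply: j1; apply: i1.
- by move=> y dy; apply: i2; apply: j2.
- by move=> y dy; rewrite j3 ?i3 //; apply: i1.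
- by move=> y dy; rewrite i4 ?j4 //; apply: j2.
- by move=> y z a dy dz; rewrite i5 // j5 //; apply: i1.
- by rewrite i6.
Qed.

Lemma Inv_child u x F G a d : Inv u x F G -> E u a d -> h d = (h u).+1 ->
  E x a (F d) /\ h (F d) = (h x).+1.
Proof.
case=> i1 i2 i3 i4 i5 i6 Eud hd.
have dud := Desc_child Eud hd.
have E' : E x a (F d) by rewrite -i6; apply/(i5 u d a (Desc_refl u) dud).
split => //.
have := Desc_le (i1 _ dud) => l.
case: (G2 E') => // e.
have : F d = x.
  apply: Desc_eq; [exact: i1 | lia].
rewrite -i6 => e'; have := i3 _ dud; rewrite e' i3 ?e' => [ed|]; last exact: Desc_refl.
by move: hd; rewrite ed; lia.
Qed.

Lemma map_walk u F s : forall y, walk E y s ->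
  (forall z, List.In z (y :: map snd s) -> Desc u z) ->
  (forall y z a, Desc u y -> Desc u z -> E y a z -> E (F y) a (F z)) ->
  walk E (F y) (map (fun p => (p.1, F p.2)) s) /\
  path_end (F y) (map (fun p => (p.1, F p.2)) s) = F (path_end y s).
Proof.
elim: s => [|[a w] s IH] y //= [Eyw ws] Hz HF.
have [w1 w2] := IH w ws (fun z iz => Hz z (or_intror iz)) HF.
split => //; split => //; apply: HF => //; apply: Hz; [left|right;left] => //.
Qed.

Lemma Inv_mapdesc u x F G a d : Inv u x F G -> E u a d -> h d = (h u).+1 ->
  forall y, Desc d y -> Desc (F d) (F y).
Proof.
move=> I Eud hd y; have [E' hd'] := Inv_child I Eud hd.
case: I => i1 i2 i3 i4 i5 i6.
rewrite (child_cone y Eud hd) (child_cone (F y) E' hd').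
move=> [s [ws [es Hz]]].
have Hz' : forall z, List.In z (d :: map snd s) -> Desc u z by move=> z iz; case: (Hz z iz).
have [w1 w2] := map_walk ws Hz' (fun y z a dy dz => proj1 (i5 y z a dy dz)).
exists (map (fun p => (p.1, F p.2)) s); split => //; split; first by rewrite w2 es.
move=> z' iz'.
have [z [ez iz]] : exists z, z' = F z /\ List.In z (d :: map snd s).
  case: iz' => [<-|]; first by exists d; split => //; left.
  rewrite -map_comp => /List.in_map_iff [z [ez iz]]; exists z.2; split => //; right.
  exact: (List.in_map snd s z iz).
subst z'; have [dz nz] := Hz z iz; split; first exact: i1.
move=> e; apply: nz; rewrite -(i3 z dz) e -i6 i3 //; exact: Desc_refl.
Qed.

Lemma Inv_restrict u x F G a d : Inv u x F G -> E u a d -> h d = (h u).+1 ->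
  Inv d (F d) F G.
Proof.
move=> I Eud hd; have [E' hd'] := Inv_child I Eud hd.
have dud := Desc_child Eud hd.
have I' := Inv_sym I.
split.
- exact: Inv_mapdesc I Eud hd.
- move=> y dy; have := Inv_mapdesc I' E' hd' dy; rewrite (I3 I) //.
- by move=> y dy; apply: (I3 I); apply: Desc_trans dud dy.
- by move=> y dy; apply: (I4 I); apply: Desc_trans (Desc_child E' hd') dy.
- by move=> y z b dy dz; apply: (I5 I); apply: Desc_trans dud _.
- by [].
Qed.

Lemma Inv_end_iso u x F G : Inv u x F G -> end_iso E r u x.
Proof.
case=> i1 i2 i3 i4 i5 i6; exists F, G.
split; first by move=> y /cone_Desc dy; apply/cone_Desc; apply: i1.
split; first by move=> y /cone_Desc dy; apply/cone_Desc; apply: i2.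
split; first by move=> y /cone_Desc dy; apply: i3.
split; first by move=> y /cone_Desc dy; apply: i4.
split; first by move=> y z a /cone_Desc dy /cone_Desc dz; apply: i5.
move=> y /cone_Desc dy; rewrite !frontier_eq; split => [->//|e].
by rewrite -(i3 _ dy) e -i6 i3 //; apply: Desc_refl.
Qed.

Lemma end_iso_Inv u x F G :
  (forall x0, cone E r u x0 -> cone E r x (F x0)) /\
  (forall y, cone E r x y -> cone E r u (G y)) /\
  (forall x0, cone E r u x0 -> G (F x0) = x0) /\
  (forall y, cone E r x y -> F (G y) = y) /\
  (forall x0 y a, cone E r u x0 -> cone E r u y -> (E x0 a y <-> E (F x0) a (F y))) /\
  (forall x0, cone E r u x0 -> (frontier E r u x0 <-> frontier E r x (F x0))) ->
  Inv u x F G.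
Proof.
move=> [j1 [j2 [j3 [j4 [j5 j6]]]]]; split.
- by move=> y /cone_Desc dy; apply/cone_Desc; apply: j1.
- by move=> y /cone_Desc dy; apply/cone_Desc; apply: j2.
- by move=> y /cone_Desc dy; apply: j3.
- by move=> y /cone_Desc dy; apply: j4.
- by move=> y z a /cone_Desc dy /cone_Desc dz; apply: j5.
- apply/frontier_eq; apply/(j6 u); [exact/cone_Desc/Desc_refl| exact/frontier_eq].
Qed.

End Good.
End Gen.


Lemma seq_last (T : Type) (s : seq T) : s = [::] \/ exists s' x, s = rcons s' x.
Proof. by case/lastP: s => [|s x]; [left | right; exists s, x]. Qed.

Lemma cat_injl (T : Type) (c x y : seq T) : c ++ x = c ++ y -> x = y.
Proof. by elim: c => //= a c IH [] /IH. Qed.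

Lemma In_mem (T : eqType) (x : T) (s : seq T) : x \in s -> List.In x s.
Proof. elim: s => //= y s IH; rewrite in_cons => /orP [/eqP ->|/IH]; auto. Qed.

Lemma is_run_cat (A : Type) (M : mNFA A) (q : mstate M) s1 s2 :
  is_run q (s1 ++ s2) = is_run q s1 && is_run (last q (map (@mtgt A M) s1)) s2.
Proof. by elim: s1 q => [|t s1 IH] q //=; rewrite IH andbA. Qed.

Lemma is_run_rcons (A : Type) (M : mNFA A) (q : mstate M) s t :
  is_run q (rcons s t) = is_run q s && (msrc t == last q (map (@mtgt A M) s)).
Proof. by rewrite -cats1 is_run_cat /= andbT. Qed.

Section RegCF.
Variables (A : finType) (inv : A -> A) (V : Type) (E : V -> A -> V -> Prop).
Hypothesis Hinv : involutive inv.
Hypothesis Hinvol : involutive_graph inv E.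
Variables (M : mNFA A) (p : mstate M) (i : V -> run_node p) (j : run_node p -> V) (r : V).
Hypothesis ij : cancel i j.
Hypothesis ji : cancel j i.
Hypothesis ir : i r = run_root p.
Hypothesis iE : forall u a v, E u a v <-> run_edge inv (i u) a (i v).

Definition h v := size (sval (i v)).

Lemma sval_inj x y : sval (i x) = sval (i y) -> x = y.
Proof. by move=> e; apply: (can_inj ij); apply: val_inj. Qed.

Lemma G1 v : h v = 0 <-> v = r.
Proof.
split => [/size0nil e|->]; last by rewrite /h ir.
by apply: sval_inj; rewrite e ir.
Qed.

Lemma G2 x a w : E x a w -> h w = (h x).+1 \/ h x = (h w).+1.
Proof. by move/iE => [[t [e _]]|[t [e _]]]; rewrite /h e size_rcons; auto. Qed.

Lemma G3 x : 0 < h x -> exists a w, E x a w /\ h x = (h w).+1.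
Proof.
rewrite /h; case: (seq_last (sval (i x))) => [-> //|[s [t es]]] _.
have pr : is_run p s by have := proj2_sig (i x); rewrite es is_run_rcons => /andP [].
exists (inv (mlbl t)), (j (exist (fun s => is_run p s) s pr)); rewrite ji es size_rcons; split => //.
by apply/iE; rewrite ji; right; exists t.
Qed.

Lemma G4 x a w a' w' : E x a w -> E x a' w' ->
  h x = (h w).+1 -> h x = (h w').+1 -> a = a' /\ w = w'.
Proof.
move=> /iE [[t [e _]]|[t [e ea]]]; first by rewrite /h e size_rcons; lia.
move=> /iE [[t' [e' _]]|[t' [e' ea']]]; first by rewrite /h e' size_rcons; lia.
move=> _ _; move: e'; rewrite e => /rcons_inj [e1 e2]; subst t'.
by split; [rewrite ea ea' | apply: sval_inj].
Qed.

Lemma Desc_pref_gen s : forall u, walk E u s -> h (path_end u s) = h u + size s ->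
  exists s', sval (i (path_end u s)) = sval (i u) ++ s'.
Proof.
elim: s => [|[a w] s IH] u /=; first by exists [::]; rewrite cats0.
move=> [Euw ws]; rewrite path_end_cons => he.
have := lb G2 ws => l.
case/iE: (Euw) => [[t [e _]]|[t [e _]]]; last first.
  by move: he l; rewrite /h e size_rcons; lia.
have hw : h w = (h u).+1 by rewrite /h e size_rcons.
have [s'' e''] := IH w ws ltac:(lia).
by exists (t :: s''); rewrite e'' e cat_rcons.
Qed.

Lemma Desc_pref v y : Desc E h v y -> exists s', sval (i y) = sval (i v) ++ s'.
Proof. by move=> [s [ws [<- hs]]]; apply: Desc_pref_gen. Qed.

Lemma pref_Desc s' : forall y v, sval (i y) = sval (i v) ++ s' -> Desc E h v y.
Proof.
elim/last_ind: s' => [|s'' t IH] y v e.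
  by rewrite cats0 in e; rewrite (sval_inj e); apply: Desc_refl.
have pr : is_run p (sval (i v) ++ s'').
  by have := proj2_sig (i y); rewrite e -rcons_cat is_run_rcons => /andP [].
set z := j (exist (fun s => is_run p s) _ pr).
have dz : Desc E h v z by apply: IH; rewrite /z ji.
apply: (Desc_step Hinvol G2 G4 dz (a := mlbl t)).
  by apply/iE; left; exists t; rewrite /z ji e rcons_cat.
by rewrite /h e size_cat; lia.
Qed.

Definition sh (v u y : V) : V :=
  j (insubd (i u) (sval (i u) ++ drop (size (sval (i v))) (sval (i y)))).

Lemma sh_val v u y s' : run_label (i u) = run_label (i v) ->
  sval (i y) = sval (i v) ++ s' -> sval (i (sh v u y)) = sval (i u) ++ s'.
Proof.
move=> lab e; rewrite /sh ji e drop_size_cat //.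
have H : is_run p (sval (i u) ++ s').
  rewrite is_run_cat (proj2_sig (i u)) /=.
  have := proj2_sig (i y); rewrite e is_run_cat => /andP [_].
  by rewrite /run_label in lab; rewrite lab.
exact: (insubdK (i u) H).
Qed.

Lemma sh_Inv v u : run_label (i u) = run_label (i v) -> Inv E h v u (sh v u) (sh u v).
Proof.
move=> lab; have lab' := esym lab.
split.
- move=> y /Desc_pref [s' e]; apply: (pref_Desc (s' := s')); exact: sh_val.
- move=> y /Desc_pref [s' e]; apply: (pref_Desc (s' := s')); exact: sh_val.
- move=> y /Desc_pref [s' e]; apply: sval_inj; rewrite e; apply: sh_val => //; exact: sh_val.
- move=> y /Desc_pref [s' e]; apply: sval_inj; rewrite e; apply: sh_val => //; exact: sh_val.
- move=> y z a /Desc_pref [s1 e1] /Desc_pref [s2 e2].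
  rewrite !iE /run_edge (sh_val lab e1) (sh_val lab e2) e1 e2.
  split => [[[t [e3 e4]]|[t [e3 e4]]]|[[t [e3 e4]]|[t [e3 e4]]]];
    [left|right|left|right]; exists t; split => //;
    (try rewrite rcons_cat); (try rewrite rcons_cat in e3); by rewrite (cat_injl e3).
- apply: sval_inj; rewrite (sh_val (s' := [::])) ?cats0 //.
Qed.

Lemma down_walk n : forall u, h u = n -> exists s, walk E u s /\ path_end u s = r.
Proof.
elim: n => [|n IH] u hu; first by exists [::]; split => //; apply/G1.
have [a [w [Euw hw]]] := G3 (ltac:(lia) : 0 < h u).
have [s [ws es]] := IH w ltac:(lia).
by exists ((a,w) :: s).
Qed.

Lemma connectedE : connected E.
Proof.
move=> u v.
have [s1 [w1 e1]] := down_walk (erefl (h u)).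
have [s2 [w2 [e2 _]]] := up_walk Hinvol G1 G3 (erefl (h v)).
exists (s1 ++ s2); rewrite walk_cat path_end_cat e1; split => //.
Qed.

Section Deg.
Variable v : V.
Definition mm (x : A * V) : option (mtrans M) :=
  if size (sval (i v)) < size (sval (i x.2)) then ohead (rev (sval (i x.2))) else None.

Lemma mm_some a w t : sval (i w) = rcons (sval (i v)) t -> mm (a,w) = Some t.
Proof. by move=> e; rewrite /mm /= e size_rcons ltnSn rev_rcons. Qed.

Lemma mm_none a w t : sval (i v) = rcons (sval (i w)) t -> mm (a,w) = None.
Proof. by move=> e; rewrite /mm /= e size_rcons ltnNge leqnSn. Qed.

Lemma mm_inj a w a' w' : E v a w -> E v a' w' -> mm (a,w) = mm (a',w') -> (a,w) = (a',w').
Proof.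
move=> /iE [[t [e ea]]|[t [e ea]]] /iE [[t' [e' ea']]|[t' [e' ea']]];
  rewrite ?(mm_some _ e) ?(mm_none _ e) ?(mm_some _ e') ?(mm_none _ e') //.
- by case=> ett; subst; rewrite (sval_inj (etrans e (esym e'))).
- move=> _; move: e'; rewrite e => /rcons_inj [e1 e2]; subst.
  by rewrite (sval_inj e1).
Qed.

Lemma mem_map_In (l : seq (A * V)) x : mm x \in map mm l -> exists y, List.In y l /\ mm x = mm y.
Proof.
elim: l => //= y l IH; rewrite in_cons => /orP [/eqP e|/IH [z [iz ez]]].
  by exists y; split => //; left.
by exists z; split => //; right.
Qed.

Lemma uniq_mm (l : seq (A * V)) : List.NoDup l -> (forall x, List.In x l -> E v x.1 x.2) ->
  uniq (map mm l).
Proof.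
elim: l => //= x l IH /List.NoDup_cons_iff [nx nd] He.
rewrite IH //; last by move=> y iy; apply: He; right.
rewrite andbT; apply/negP => /mem_map_In [y [iy ey]].
have E1 := He x (or_introl erefl); have E2 := He y (or_intror iy).
apply: nx; move: E1 E2 ey iy; case: x He => a w _; case: y => a' w' /= E1 E2 ey iy.
by rewrite (mm_inj E1 E2 ey).
Qed.
End Deg.

Lemma bounded : bounded_degree E.
Proof.
exists #|{: option (mtrans M)}| => v l nd He.
have u := uniq_mm nd He.
rewrite -(size_map (mm v)) -(card_uniqP u); exact: max_card.
Qed.

Definition pick (q : mstate M) : V := epsilon (inhabits r) (fun v => run_label (i v) = q).

Lemma fin_classes : finitely_many_cone_classes E r.
Proof.
exists (map pick (enum (mstate M))) => v.
exists (pick (run_label (i v))); split.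
  by apply: List.in_map; apply: In_mem; rewrite mem_enum.
apply: (Inv_end_iso Hinvol G1 G2 G3 G4).
apply: sh_Inv.
by apply: (epsilon_spec (inhabits r) (fun w => run_label (i w) = run_label (i v))); exists v.
Qed.

Lemma reg_cf : context_free E.
Proof. split; first exact: connectedE. split; first exact: bounded. by exists r; exact: fin_classes. Qed.

End RegCF.


Section TreeLev.
Variables (A : Type) (inv : A -> A) (V : Type) (E : V -> A -> V -> Prop).
Hypothesis Hinv : involutive inv.
Hypothesis Hinvol : involutive_graph inv E.
Variable r0 : V.
Hypothesis Htr : is_tree_at inv E r0.

Lemma reduced_rcons_prefix (u : V) (s : seq (A * V)) x :
  reduced inv u (rcons s x) -> reduced inv u s.
Proof.
elim: s u => [|[a v] s IH] u //=.
move=> [H1 H2]; split; last exact: IH H2.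
by case: s H1 {IH H2} => [|[b w] s].
Qed.

Lemma reduced_rcons_ext (u : V) (s : seq (A * V)) a w :
  reduced inv u s ->
  (forall s' b v', s = rcons s' (b,v') -> ~ (a = inv b /\ w = path_end u s')) ->
  reduced inv u (rcons s (a,w)).
Proof.
elim: s u => [|[b v] s IH] u //= [H1 H2] H.
case: s IH H1 H2 H => [|[c z] s] IH H1 H2 H.
  by split => //; apply: (H [::] b v).
split => //; apply: IH => // s' b' v' es.
by apply: (H ((b,v) :: s') b' v'); rewrite es.
Qed.

Definition P (v : V) : seq (A * V) :=
  epsilon (inhabits [::]) (fun s => walk E r0 s /\ reduced inv r0 s /\ path_end r0 s = v).

Lemma P_spec v : walk E r0 (P v) /\ reduced inv r0 (P v) /\ path_end r0 (P v) = v.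
Proof.
have [s [Hs _]] := Htr v.
exact: (epsilon_spec (inhabits [::]) (fun s => walk E r0 s /\ reduced inv r0 s /\ path_end r0 s = v) (ex_intro _ s Hs)).
Qed.

Lemma P_uniq v s : walk E r0 s -> reduced inv r0 s -> path_end r0 s = v -> s = P v.
Proof.
move=> w1 r1 e1; have [s0 [_ U]] := Htr v.
by rewrite -(U s (conj w1 (conj r1 e1))) -(U (P v) (P_spec v)).
Qed.

Lemma P_inj v w : P v = P w -> v = w.
Proof. by move=> e; rewrite -(proj2 (proj2 (P_spec v))) e (proj2 (proj2 (P_spec w))). Qed.

Lemma edgeP v a w : E v a w -> P w = rcons (P v) (a,w) \/ P v = rcons (P w) (inv a, v).
Proof.
move=> Evw; have [wv [rv ev]] := P_spec v.
case: (classic (exists s' b v', P v = rcons s' (b,v') /\ a = inv b /\ w = path_end r0 s')).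
  move=> [s' [b [v' [e [eb ew]]]]]; right.
  move: wv rv ev; rewrite e walk_rcons path_end_rcons => -[ws' _] /reduced_rcons_prefix rs' ev'.
  subst v'; rewrite -(P_uniq ws' rs' (esym ew)) eb Hinv //.
move=> N; left; symmetry; apply: P_uniq.
- by rewrite walk_rcons ev.
- apply: reduced_rcons_ext => // s' b v' es [e1 e2]; apply: N; exists s', b, v'; auto.
- exact: path_end_rcons.
Qed.

Definition h0 v := size (P v).

Lemma edge_h0 v a w : E v a w -> h0 w = (h0 v).+1 \/ h0 v = (h0 w).+1.
Proof. by case/edgeP => e; rewrite /h0 e size_rcons; auto. Qed.

Lemma parity u s : walk E u s -> exists k, h0 u + h0 (path_end u s) + size s = 2 * k.
Proof.
elim: s u => [|[a v] s IH] u /=; first by exists (h0 u); rewrite /path_end /=; lia.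
move=> [Euv ws]; have [k hk] := IH v ws; rewrite path_end_cons.
case: (edge_h0 Euv) => e; [exists k | exists k.+1]; lia.
Qed.

Definition S c y := exists t, P y = P c ++ t.

Lemma first_exit (Q : V -> Prop) u s : walk E u s -> Q u -> ~ Q (path_end u s) ->
  exists s1 b z s2, s = s1 ++ (b,z) :: s2 /\ Q (path_end u s1) /\ ~ Q z /\ E (path_end u s1) b z.
Proof.
elim: s u => [|[a v] s IH] u /=; first by rewrite /path_end /= => _ q nq.
move=> [Euv ws] Qu; rewrite path_end_cons => nQ.
case: (classic (Q v)) => Qv.
  have [s1 [b [z [s2 [e [q1 [q2 q3]]]]]]] := IH v ws Qv nQ.
  by exists ((a,v) :: s1), b, z, s2; rewrite e.
by exists [::], a, v, s.
Qed.

Lemma leave1 c y a z : S c y -> E y a z -> ~ S c z -> y = c.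
Proof.
move=> [t et] Eyz nS; case: (edgeP Eyz) => e.
  by case: nS; exists (rcons t (a,z)); rewrite e et rcons_cat.
move: et; rewrite e; case: (seq_last t) => [->|[t' [x ->]]].
  by rewrite cats0 => e'; apply: P_inj; rewrite -e'.
rewrite -rcons_cat => /rcons_inj [e1 _]; case: nS; by exists t'.
Qed.

Lemma enter1 c y a z : ~ S c y -> E y a z -> S c z -> z = c /\ P z = rcons (P y) (a,z).
Proof.
move=> nS Eyz [t et]; case: (edgeP Eyz) => e.
  split => //; move: et; rewrite e; case: (seq_last t) => [->|[t' [x ->]]].
    by rewrite cats0 => e'; apply: P_inj; rewrite -e'.
  rewrite -rcons_cat => /rcons_inj [e1 _]; case: nS; by exists t'.
by case: nS; exists (rcons t (inv a, y)); rewrite e et rcons_cat.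
Qed.

Variable r : V.
Hypothesis conn : connected E.

Lemma lvl_ex v : exists n, level E r v n.
Proof.
have [s [ws es]] := conn r v.
pose Q n := exists s, walk E r s /\ path_end r s = v /\ size s = n.
have H : forall n, Q n -> exists k, Q k /\ forall m, Q m -> k <= m.
  elim/ltn_ind => n IH Qn.
  case: (classic (exists m, m < n /\ Q m)) => [[m [mn Qm]]|N].
    exact: IH mn Qm.
  exists n; split => // m Qm; rewrite leqNgt; apply/negP => mn; apply: N; by exists m.
have [k [[s0 [w0 [e0 z0]]] mk]] := H (size s) (ex_intro _ s (conj ws (conj es erefl))).
exists k; split; first by exists s0.
by move=> s1 w1 e1; apply: mk; exists s1.
Qed.

Definition lv v := epsilon (inhabits 0) (level E r v).

Lemma lv_spec v : level E r v (lv v).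
Proof. exact: (epsilon_spec (inhabits 0) (level E r v) (lvl_ex v)). Qed.

Lemma lv_uniq v n : level E r v n -> lv v = n.
Proof.
move=> [[s [ws [es ss]]] mn]; have [[s' [ws' [es' ss']]] mn'] := lv_spec v.
have := mn s' ws' es'; have := mn' s ws es; lia.
Qed.

Lemma lv_le s : walk E r s -> lv (path_end r s) <= size s.
Proof. by move=> ws; have [_ mn] := lv_spec (path_end r s); apply: mn. Qed.

Lemma lv_geo v : exists s, walk E r s /\ path_end r s = v /\ size s = lv v.
Proof. by have [H _] := lv_spec v. Qed.

Lemma tri x a w : E x a w -> lv w <= (lv x).+1.
Proof.
move=> Exw; have [s [ws [es ss]]] := lv_geo x.
have := @lv_le (rcons s (a,w)); rewrite walk_rcons path_end_rcons size_rcons es ss.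
by apply.
Qed.

Lemma LG1 v : lv v = 0 <-> v = r.
Proof.
split.
  move=> e; have [s [ws [es ss]]] := lv_geo v; rewrite e in ss.
  by move: es; rewrite (size0nil ss).
move=> ->; apply: lv_uniq; split; first by exists [::].
by [].
Qed.

Lemma LG2 x a w : E x a w -> lv w = (lv x).+1 \/ lv x = (lv w).+1.
Proof.
move=> Exw; have Ewx := proj1 (Hinvol _ _ _) Exw.
have t1 := tri Exw; have t2 := tri Ewx.
have [s1 [w1 [e1 z1]]] := lv_geo x; have [s2 [w2 [e2 z2]]] := lv_geo w.
have [k1 p1] := parity w1; have [k2 p2] := parity w2.
rewrite e1 z1 in p1; rewrite e2 z2 in p2.
case: (edge_h0 Exw); lia.
Qed.

Lemma LG3 x : 0 < lv x -> exists a w, E x a w /\ lv x = (lv w).+1.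
Proof.
move=> hx; have [s [ws [es ss]]] := lv_geo x.
case: (seq_last s) ws es ss => [-> /= _ _ z|[s' [[b x'] ->]]]; first lia.
rewrite walk_rcons path_end_rcons size_rcons => -[ws' Eb] ex ss; subst x'.
have l := lv_le ws'.
have Ex := proj1 (Hinvol _ _ _) Eb.
exists (inv b), (path_end r s'); split => //.
have := tri Eb; lia.
Qed.

Lemma child_root x a w : E x a w -> P w = rcons (P x) (a,w) -> lv x = (lv w).+1 -> S w r.
Proof.
move=> Exw ew hx; apply: NNPP => nS.
have [s [ws [es ss]]] := lv_geo w.
have Sw : S w w by exists [::]; rewrite cats0.
have [s1 [b [z [s2 [e [q1 [q2 q3]]]]]]] :=
  first_exit (Q := fun y => ~ S w y) ws nS (ltac:(rewrite es; auto)).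
have Sz : S w z by apply: NNPP.
have [ez ez'] := enter1 q1 q3 Sz; subst z.
move: ez'; rewrite ew => /rcons_inj [ex _].
have ws1 : walk E r s1 by move: ws; rewrite e walk_cat => -[].
have := lv_le ws1.
rewrite -(P_inj ex) => l.
move: ss; rewrite e size_cat /=; lia.
Qed.

Lemma mixed x a w a' w' : E x a w -> E x a' w' -> lv x = (lv w).+1 -> lv x = (lv w').+1 ->
  P w = rcons (P x) (a,w) -> P x = rcons (P w') (inv a', x) -> False.
Proof.
move=> Exw Exw' h1 h2 e1 e2.
have Sr := child_root Exw e1 h1.
have [s [ws [es ss]]] := lv_geo w'.
have nS : ~ S w (path_end r s).
  rewrite es => -[t et]; move: (f_equal size et); rewrite size_cat e1 size_rcons e2 size_rcons; lia.
have [s1 [b [z [s2 [e [q1 [q2 q3]]]]]]] := first_exit (Q := S w) ws Sr nS.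
have ey := leave1 q1 q3 q2.
have ws1 : walk E r s1 by move: ws; rewrite e walk_cat => -[].
have := lv_le ws1.
rewrite ey => l.
move: ss; rewrite e size_cat /=; lia.
Qed.

Lemma LG4 x a w a' w' : E x a w -> E x a' w' ->
  lv x = (lv w).+1 -> lv x = (lv w').+1 -> a = a' /\ w = w'.
Proof.
move=> Exw Exw' h1 h2.
case: (edgeP Exw) => e1; case: (edgeP Exw') => e2.
- have [t1 et1] := child_root Exw e1 h1; have [t2 et2] := child_root Exw' e2 h2.
  move: et2; rewrite et1 e1 e2 !cat_rcons => /cat_injl [-> ->]; by [].
- by case: (mixed Exw Exw' h1 h2 e1 e2).
- by case: (mixed Exw' Exw h2 h1 e2 e1).
- move: e2; rewrite e1 => /rcons_inj [e3 ea].
  by split; [apply: (inv_inj Hinv) | apply: P_inj].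
Qed.

End TreeLev.


Lemma nth_In (T : Type) (x0 : T) (s : seq T) n : n < size s -> List.In (nth x0 s n) s.
Proof. elim: s n => //= x s IH [|n] //= hn; [left | right; apply: IH] => //. Qed.

Lemma In_nth' (T : Type) (x0 : T) (s : seq T) x : List.In x s -> exists n, n < size s /\ nth x0 s n = x.
Proof.
elim: s => //= y s IH [->|ix]; first by exists 0.
by have [n [hn en]] := IH ix; exists n.+1.
Qed.

Lemma NoDup_nth (T : Type) (x0 : T) (s : seq T) m n : List.NoDup s -> m < size s -> n < size s ->
  nth x0 s m = nth x0 s n -> m = n.
Proof.
elim: s m n => //= x s IH [|m] [|n] /List.NoDup_cons_iff [nx nd] //= hm hn e.
- by case: nx; rewrite e; apply: nth_In.
- by case: nx; rewrite -e; apply: nth_In.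
- by rewrite (IH m n nd hm hn e).
Qed.

Lemma exists_enum (X : Type) (Pr : X -> Prop) N :
  (forall l, List.NoDup l -> (forall x, List.In x l -> Pr x) -> size l <= N) ->
  exists l, List.NoDup l /\ forall x, List.In x l <-> Pr x.
Proof.
move=> HN.
have H : forall m l, List.NoDup l -> (forall x, List.In x l -> Pr x) -> N - size l = m ->
    exists l, List.NoDup l /\ forall x, List.In x l <-> Pr x.
  elim=> [|m IH] l nd Hl e.
    case: (classic (exists x, Pr x /\ ~ List.In x l)) => [[x [px nx]]|nx].
      have := HN (x :: l) (List.NoDup_cons x nx nd) (fun y iy => ltac:(case: iy => [<-|]; auto)).
      have := HN l nd Hl; rewrite /=; lia.
    exists l; split => // x; split; first exact: Hl.
    by move=> px; apply: NNPP => nx'; apply: nx; exists x.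
  case: (classic (exists x, Pr x /\ ~ List.In x l)) => [[x [px nx]]|nx].
    apply: (IH (x :: l) (List.NoDup_cons x nx nd)); last by rewrite /=; lia.
    by move=> y [<-|]; auto.
  exists l; split => // x; split; first exact: Hl.
  by move=> px; apply: NNPP => nx'; apply: nx; exists x.
exact: (H (N - 0) [::] (List.NoDup_nil _) (fun x (ix : List.In x [::]) => False_ind _ ix) erefl).
Qed.

Section CFReg.
Variables (A : finType) (inv : A -> A) (V : Type) (E : V -> A -> V -> Prop).
Hypothesis Hinv : involutive inv.
Hypothesis Hinvol : involutive_graph inv E.
Variables (r : V) (h : V -> nat).
Hypothesis G1 : forall v, h v = 0 <-> v = r.
Hypothesis G2 : forall x a w, E x a w -> h w = (h x).+1 \/ h x = (h w).+1.
Hypothesis G3 : forall x, 0 < h x -> exists a w, E x a w /\ h x = (h w).+1.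
Hypothesis G4 : forall x a w a' w', E x a w -> E x a' w' ->
  h x = (h w).+1 -> h x = (h w').+1 -> a = a' /\ w = w'.
Hypothesis bd : bounded_degree E.
Variable reps : seq V.
Hypothesis Hreps : forall v, exists u, List.In u reps /\ end_iso E r v u.

Definition k := size reps.
Lemma kpos : 0 < k.
Proof. by have [u [iu _]] := Hreps r; rewrite /k; case: reps iu. Qed.

Definition rep (q : 'I_k) : V := nth r reps q.

Definition cls (v : V) : 'I_k :=
  epsilon (inhabits (Ordinal kpos)) (fun q => end_iso E r v (rep q)).

Lemma cls_spec v : end_iso E r v (rep (cls v)).
Proof.
apply: (epsilon_spec (inhabits (Ordinal kpos)) (fun q => end_iso E r v (rep q))).
have [u [iu eu]] := Hreps v; have [n [hn en]] := In_nth' r iu.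
by exists (Ordinal hn); rewrite /rep /= en.
Qed.

Definition isoFG (v u : V) : (V -> V) * (V -> V) :=
  epsilon (inhabits (id, id)) (fun FG => Inv E h v u FG.1 FG.2).

Lemma isoFG_spec v u : end_iso E r v u -> Inv E h v u (isoFG v u).1 (isoFG v u).2.
Proof.
move=> [F [G H]]; apply: (epsilon_spec (inhabits (id, id)) (fun FG => Inv E h v u FG.1 FG.2)).
by exists (F, G); apply: (end_iso_Inv Hinvol G1 G2 G3 G4).
Qed.

Definition childP (u : V) (x : A * V) := E u x.1 x.2 /\ h x.2 = (h u).+1.

Definition ch (u : V) : seq (A * V) :=
  epsilon (inhabits [::]) (fun l => List.NoDup l /\ forall x, List.In x l <-> childP u x).

Lemma ch_spec u : List.NoDup (ch u) /\ forall x, List.In x (ch u) <-> childP u x.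
Proof.
apply: (epsilon_spec (inhabits [::]) (fun l => List.NoDup l /\ forall x, List.In x l <-> childP u x)).
have [N HN] := bd; apply: (exists_enum (N := N)) => l nd Hl.
by apply: (HN u l nd) => x ix; case: (Hl x ix).
Qed.

Definition trans := {q : 'I_k & 'I_(size (ch (rep q)))}.

Definition cd (t : trans) : A * V := tnth (in_tuple (ch (rep (tag t)))) (tagged t).

Lemma cd_child t : childP (rep (tag t)) (cd t).
Proof.
apply/(proj2 (ch_spec _)); rewrite /cd (tnth_nth (cd t)) /=.
exact: nth_In.
Qed.

Lemma cd_inj t1 t2 : tag t1 = tag t2 -> cd t1 = cd t2 -> t1 = t2.
Proof.
case: t1 => q1 i1; case: t2 => q2 i2 /= eq; subst q2.
rewrite /cd /= => e.
set s := ch (rep q1) in i1 i2 e *; set x0 := tnth (in_tuple s) i1.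
have e' : nth x0 s i1 = nth x0 s i2 by rewrite -!(tnth_nth x0 (in_tuple s)).
have := NoDup_nth (proj1 (ch_spec (rep q1))) (ltn_ord i1) (ltn_ord i2) e'.
by move=> /val_inj ->.
Qed.

Lemma cd_surj q x : childP (rep q) x -> exists t, tag t = q /\ cd t = x.
Proof.
move/(proj2 (ch_spec _)) => ix; have [n [hn en]] := In_nth' x ix.
exists (existT _ q (Ordinal hn)); split => //.
by rewrite /cd /= (tnth_nth x).
Qed.

Definition MM : mNFA A := @MNFA A 'I_k trans (fun t => tag t) (fun t => (cd t).1) (fun t => cls (cd t).2).
Definition p0 : mstate MM := cls r.

Definition step (st : V * (V -> V) * (V -> V)) (t : trans) : V * (V -> V) * (V -> V) :=
  let: (x, F, G) := st in
  let d := (cd t).2 in let FG := isoFG d (rep (cls d)) in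
  (F d, fun y => F (FG.2 y), fun y => FG.1 (G y)).

Definition st0 : V * (V -> V) * (V -> V) := (r, (isoFG r (rep p0)).2, (isoFG r (rep p0)).1).

Definition J (s : seq trans) := foldl step st0 s.
Definition jr s := (J s).1.1.

Definition lastst (s : seq trans) : 'I_k := last p0 (map (@mtgt A MM) s).

Lemma J_inv s : @is_run A MM p0 s -> Inv E h (rep (lastst s)) (J s).1.1 (J s).1.2 (J s).2.
Proof.
elim/last_ind: s => [|s t IH].
  move=> _; rewrite /J /= /lastst /=.
  exact: (Inv_sym (isoFG_spec (cls_spec r))).
rewrite is_run_rcons => /andP [rs /eqP et].
have I := IH rs.
rewrite /J foldl_rcons -/(J s) /lastst map_rcons last_rcons /=.
case: (J s) I => [[x F] G] /= I.
move: et; rewrite /= -/(lastst s) => et.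
have [Ed hd] := cd_child t; rewrite et in Ed hd.
have I2 := Inv_restrict Hinvol G2 G4 I Ed hd.
have I3 := Inv_sym (isoFG_spec (cls_spec (cd t).2)).
exact: (Inv_comp I3 I2).
Qed.

Lemma J_rcons s t : J (rcons s t) = step (J s) t.
Proof. by rewrite /J foldl_rcons. Qed.

Lemma CC1 s t : @is_run A MM p0 (rcons s t) ->
  jr (rcons s t) = (J s).1.2 (cd t).2 /\ E (jr s) (cd t).1 (jr (rcons s t)) /\
  h (jr (rcons s t)) = (h (jr s)).+1.
Proof.
rewrite is_run_rcons => /andP [rs /eqP et].
have I := J_inv rs.
rewrite /jr J_rcons.
case: (J s) I => [[x F] G] /= I.
move: et; rewrite /= -/(lastst s) => et.
have [Ed hd] := cd_child t; rewrite et in Ed hd.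
have [E' h'] := Inv_child G2 I Ed hd.
by split.
Qed.

Lemma CC2 s a y : @is_run A MM p0 s -> E (jr s) a y -> h y = (h (jr s)).+1 ->
  exists t, tag t = lastst s /\ jr (rcons s t) = y /\ (cd t).1 = a.
Proof.
move=> rs Exy hy; have I := J_inv rs.
rewrite /jr in Exy hy.
move: I Exy hy; case E0: (J s) => [[x F] G] /= I Exy hy.
have Is := Inv_sym I.
have [E' h'] := Inv_child G2 Is Exy hy.
have [t [tt ct]] := cd_surj (x := (a, G y)) (conj E' h').
exists t; split => //; rewrite /jr J_rcons E0 /= ct /=; split => //.
apply: (I4 I); exact: Desc_child Exy hy.
Qed.

Lemma h_jr s : @is_run A MM p0 s -> h (jr s) = size s.
Proof.
elim/last_ind: s => [|s t IH]; first by move=> _; apply/G1.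
move=> rs; have [_ [_ ->]] := CC1 rs.
by rewrite IH ?size_rcons //; move: rs; rewrite is_run_rcons => /andP [].
Qed.

Lemma jr_inj n : forall s1 s2, size s1 = n -> @is_run A MM p0 s1 -> @is_run A MM p0 s2 ->
  jr s1 = jr s2 -> s1 = s2.
Proof.
elim: n => [|n IH] s1 s2 sz r1 r2 e.
  have := h_jr r2; rewrite -e h_jr // sz => /esym/size0nil ->.
  exact: size0nil.
have sz2 : size s2 = n.+1 by rewrite -(h_jr r2) -e h_jr.
case: (seq_last s1) sz r1 e => [->//|[s1' [t1 ->]]] sz r1 e.
case: (seq_last s2) sz2 r2 e => [->//|[s2' [t2 ->]]] sz2 r2 e.
have [c1 [E1 h1]] := CC1 r1; have [c2 [E2 h2]] := CC1 r2.
have r1' : @is_run A MM p0 s1' by move: r1; rewrite is_run_rcons => /andP [].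
have r2' : @is_run A MM p0 s2' by move: r2; rewrite is_run_rcons => /andP [].
rewrite e in E1 h1.
have [ea ew] := G4 (proj1 (Hinvol _ _ _) E1) (proj1 (Hinvol _ _ _) E2) h1 h2.
have es : s1' = s2' by apply: IH => //; move: sz; rewrite size_rcons; case.
subst s2'.
have tt1 : tag t1 = lastst s1' by move: r1; rewrite is_run_rcons => /andP [_ /eqP].
have tt2 : tag t2 = lastst s1' by move: r2; rewrite is_run_rcons => /andP [_ /eqP].
have I := J_inv r1'.
have [Ed1 hd1] := cd_child t1; have [Ed2 hd2] := cd_child t2.
rewrite tt1 in Ed1 hd1; rewrite tt2 in Ed2 hd2.
have d1 := Desc_child Ed1 hd1; have d2 := Desc_child Ed2 hd2.
have ed : (cd t1).2 = (cd t2).2.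
  by rewrite -(I3 I d1) -(I3 I d2) -c1 -c2 e.
have ecd : cd t1 = cd t2.
  by case: (cd t1) ed ea => a1 x1; case: (cd t2) => a2 x2 /= -> /(inv_inj Hinv) ->.
by rewrite (cd_inj (etrans tt1 (esym tt2)) ecd).
Qed.

Definition jn (rho : run_node p0) : V := jr (sval rho).

Lemma jn_inj : injective jn.
Proof.
move=> x y e; apply: val_inj; apply: (jr_inj (erefl _) (proj2_sig x) (proj2_sig y) e).
Qed.

Lemma jn_surj n : forall v, h v = n -> exists rho, jn rho = v.
Proof.
elim: n => [|n IH] v hv.
  exists (run_root p0); rewrite /jn /jr /=; symmetry; exact/G1.
have [a [w [Evw hw]]] := G3 (ltac:(lia) : 0 < h v).
have [rho erho] := IH w ltac:(lia).
have Ewv := proj1 (Hinvol _ _ _) Evw.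
rewrite -erho in Ewv hw.
have [t [tt [jt _]]] := CC2 (proj2_sig rho) Ewv hw.
have pr : @is_run A MM p0 (rcons (sval rho) t) by rewrite is_run_rcons (proj2_sig rho) /= tt.
by exists (exist (fun s => @is_run A MM p0 s) _ pr).
Qed.

Definition ii (v : V) : run_node p0 := epsilon (inhabits (run_root p0)) (fun rho => jn rho = v).

Lemma jn_ii v : jn (ii v) = v.
Proof.
apply: (epsilon_spec (inhabits (run_root p0)) (fun rho => jn rho = v)).
exact: (jn_surj (erefl (h v))).
Qed.

Lemma ii_jn rho : ii (jn rho) = rho.
Proof. by apply: jn_inj; rewrite jn_ii. Qed.

Lemma ii_edge u a v : E u a v <-> run_edge inv (ii u) a (ii v).
Proof.
rewrite -{1}(jn_ii u) -{1}(jn_ii v); set rho := ii u; set sig := ii v.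
split.
  move=> Euv; case: (G2 Euv) => hv.
    have [t [tt [jt ta]]] := CC2 (proj2_sig rho) Euv hv.
    have pr : @is_run A MM p0 (rcons (sval rho) t) by rewrite is_run_rcons (proj2_sig rho) /= tt.
    left; exists t; split => //.
    by apply: (jr_inj (erefl _) (proj2_sig sig) pr); rewrite jt.
  have Evu := proj1 (Hinvol _ _ _) Euv.
  have [t [tt [jt ta]]] := CC2 (proj2_sig sig) Evu hv.
  have pr : @is_run A MM p0 (rcons (sval sig) t) by rewrite is_run_rcons (proj2_sig sig) /= tt.
  right; exists t; split; last by rewrite /= ta Hinv.
  by apply: (jr_inj (erefl _) (proj2_sig rho) pr); rewrite jt.
move=> [[t [e ea]]|[t [e ea]]].
  have pr := proj2_sig sig; rewrite e in pr.
  have [_ [E' _]] := CC1 pr.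
  by rewrite /jn e ea.
have pr := proj2_sig rho; rewrite e in pr.
have [_ [E' _]] := CC1 pr.
by rewrite /jn e ea; apply/Hinvol; rewrite Hinv.
Qed.

Lemma cf_reg : regular_tree inv E.
Proof.
exists r, (mstate MM), (fun v => run_label (ii v)), MM, p0, ii, id.
split; first by exists jn; [move=> v; exact: jn_ii | move=> x; exact: ii_jn].
split; first by rewrite -(ii_jn (run_root p0)); congr ii; rewrite /jn /jr /=.
split; first exact: ii_edge.
split; first by exists id.
by [].
Qed.

End CFReg.


Theorem theorem3p3 (A : finType) (inv : A -> A) (Hinv : involutive inv)
  (V : Type) (E : V -> A -> V -> Prop)
  (Hinvol : involutive_graph inv E) (Htree : is_tree inv E) :
  regular_tree inv E <-> context_free E.
Proof.
split.
  move=> [r [P [lab [M [p [i [b [ibij [ir [iE _]]]]]]]]]].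
  case: ibij => j ij ji.
  exact: (reg_cf Hinvol ij ji ir iE).
move=> [conn [bd [r [reps Hreps]]]].
have [r0 Htr] := Htree.
apply: (cf_reg (h := lv E r) Hinv Hinvol _ _ _ _ bd Hreps).
- exact: (LG1 r conn).
- by move=> x a w; apply: (LG2 Hinv Hinvol Htr r conn).
- by move=> x; apply: (LG3 Hinvol conn).
- by move=> x a w a' w'; apply: (LG4 Hinv Htr conn).
Qed.
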